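(* Let $t$ be a positive integer, $n_1,\dots,n_t$ positive integers, and $h_1,\dots,h_t\in\mathbb{R}^d$. Suppose that the subgroup $G=h_1\mathbb{Z}+\dots+h_t\mathbb{Z}$ of $\mathbb{R}^d$ has Euclidean closure $\overline{G}=V\oplus\Lambda$, where $V$ is a proper vector subspace of $\mathbb{R}^d$ and $\Lambda$ is a discrete additive subgroup of $\mathbb{R}^d$. Then there exist a finite dimensional linear subspace $H\subseteq C(\mathbb{R}^d)$ with $\bigcup_{k=1}^t\Delta_{h_k}(H)\subseteq H$ and a continuous function $\varphi:\mathbb{R}^d\to\mathbb{R}$ with $\Delta_{h_k}^{n_k}\varphi\in H$ for $k=1,\dots,t$, such that $\varphi$ is not an exponential polynomial on $\mathbb{R}^d$.
   Context: $C(\mathbb{R}^d)$ is the space of continuous complex valued functions on $\mathbb{R}^d$; $(\Delta_hf)(x)=f(x+h)-f(x)$ and $\Delta_h^m$ is its $m$-fold composition. An exponential polynomial on $\mathbb{R}^d$ is a function of the form $x\mapsto\sum_{j=1}^r p_j(x)e^{\langle\lambda_j,x\rangle}$ with polynomials $p_j$ and $\lambda_j\in\mathbb{C}^d$. *)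

(* Defs.v *)
From Stdlib Require Import Reals Lra ZArith List.
From Stdlib Require Fin.
Open Scope R_scope.

Definition Cplx : Type := (R * R)%type.
Definition CR (r : R) : Cplx := (r, 0).
Definition C0 : Cplx := (0, 0).
Definition Cadd (z w : Cplx) : Cplx := (fst z + fst w, snd z + snd w).
Definition Copp (z : Cplx) : Cplx := (- fst z, - snd z).
Definition Csub (z w : Cplx) : Cplx := Cadd z (Copp w).
Definition Cmul (z w : Cplx) : Cplx :=
  (fst z * fst w - snd z * snd w, fst z * snd w + snd z * fst w).
Definition Cexp (z : Cplx) : Cplx :=
  (exp (fst z) * cos (snd z), exp (fst z) * sin (snd z)).
Definition Cnorm (z : Cplx) : R := sqrt (fst z ^ 2 + snd z ^ 2).

Fixpoint rsum (n : nat) (f : nat -> R) : R :=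
  match n with O => 0 | S m => rsum m f + f m end.
Fixpoint csum_list (l : list Cplx) : Cplx :=
  match l with nil => C0 | z :: l' => Cadd z (csum_list l') end.

Fixpoint finsum (d : nat) : (Fin.t d -> R) -> R :=
  match d return (Fin.t d -> R) -> R with
  | O => fun _ => 0
  | S m => fun f => f Fin.F1 + finsum m (fun i => f (Fin.FS i))
  end.
Fixpoint cfinsum (d : nat) : (Fin.t d -> Cplx) -> Cplx :=
  match d return (Fin.t d -> Cplx) -> Cplx with
  | O => fun _ => C0
  | S m => fun f => Cadd (f Fin.F1) (cfinsum m (fun i => f (Fin.FS i)))
  end.

Definition Rd (d : nat) : Type := Fin.t d -> R.
Definition vzero (d : nat) : Rd d := fun _ => 0.
Definition vadd {d} (x y : Rd d) : Rd d := fun i => x i + y i.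
Definition vopp {d} (x : Rd d) : Rd d := fun i => - x i.
Definition vsub {d} (x y : Rd d) : Rd d := fun i => x i - y i.
Definition vscal {d} (a : R) (x : Rd d) : Rd d := fun i => a * x i.
Definition vnorm {d} (x : Rd d) : R := sqrt (finsum d (fun i => x i ^ 2)).

Definition ccontinuous {d} (f : Rd d -> Cplx) : Prop :=
  forall x eps, 0 < eps -> exists delta, 0 < delta /\
    forall y, vnorm (vsub y x) < delta -> Cnorm (Csub (f y) (f x)) < eps.
Definition rcontinuous {d} (f : Rd d -> R) : Prop :=
  forall x eps, 0 < eps -> exists delta, 0 < delta /\
    forall y, vnorm (vsub y x) < delta -> Rabs (f y - f x) < eps.

Definition Diff {d} (h : Rd d) (f : Rd d -> Cplx) : Rd d -> Cplx :=
  fun x => Csub (f (vadd x h)) (f x).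
Fixpoint DiffPow {d} (h : Rd d) (m : nat) (f : Rd d -> Cplx) : Rd d -> Cplx :=
  match m with O => f | S k => Diff h (DiffPow h k f) end.

Definition in_span {d} (gs : list (Rd d -> Cplx)) (f : Rd d -> Cplx) : Prop :=
  exists cs : list Cplx, length cs = length gs /\
    forall x, f x = csum_list (map (fun p => Cmul (fst p) ((snd p) x)) (combine cs gs)).

Definition fin_dim_subspace_C {d} (H : (Rd d -> Cplx) -> Prop) : Prop :=
  (forall f, H f -> ccontinuous f) /\
  H (fun _ => C0) /\
  (forall f g, H f -> H g -> H (fun x => Cadd (f x) (g x))) /\
  (forall (c : Cplx) f, H f -> H (fun x => Cmul c (f x))) /\
  (exists gs : list (Rd d -> Cplx), forall f, H f -> in_span gs f).

Inductive is_poly {d : nat} : (Rd d -> Cplx) -> Prop :=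
| poly_const : forall c : Cplx, is_poly (fun _ => c)
| poly_coord : forall i : Fin.t d, is_poly (fun x => CR (x i))
| poly_add : forall p q, is_poly p -> is_poly q -> is_poly (fun x => Cadd (p x) (q x))
| poly_mul : forall p q, is_poly p -> is_poly q -> is_poly (fun x => Cmul (p x) (q x)).

Definition cdot {d} (lam : Fin.t d -> Cplx) (x : Rd d) : Cplx :=
  cfinsum d (fun i => Cmul (lam i) (CR (x i))).

Definition exp_poly {d} (f : Rd d -> Cplx) : Prop :=
  exists terms : list ((Rd d -> Cplx) * (Fin.t d -> Cplx)),
    (forall pl, In pl terms -> is_poly (fst pl)) /\
    forall x, f x = csum_list (map (fun pl => Cmul ((fst pl) x) (Cexp (cdot (snd pl) x))) terms).

(* G = h_0 Z + ... + h_{t-1} Z *)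
Definition gen_subgroup {d} (t : nat) (h : nat -> Rd d) (x : Rd d) : Prop :=
  exists m : nat -> Z, x = (fun i => rsum t (fun k => IZR (m k) * h k i)).

Definition closure {d} (S : Rd d -> Prop) (x : Rd d) : Prop :=
  forall eps, 0 < eps -> exists y, S y /\ vnorm (vsub x y) < eps.

Definition is_vsubspace {d} (V : Rd d -> Prop) : Prop :=
  V (vzero d) /\ (forall x y, V x -> V y -> V (vadd x y)) /\
  (forall a x, V x -> V (vscal a x)).

Definition is_add_subgroup {d} (L : Rd d -> Prop) : Prop :=
  L (vzero d) /\ (forall x y, L x -> L y -> L (vadd x y)) /\
  (forall x, L x -> L (vopp x)).

Definition is_discrete {d} (L : Rd d -> Prop) : Prop :=
  forall x, L x -> exists eps, 0 < eps /\
    forall y, L y -> vnorm (vsub y x) < eps -> y = x.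

Definition is_direct_sum {d} (S V L : Rd d -> Prop) : Prop :=
  (forall x, S x <-> exists v l, V v /\ L l /\ x = vadd v l) /\
  (forall x, V x -> L x -> x = vzero d).

(* Main.v *)
Require Import Defs.
From Stdlib Require Import Reals ZArith List.
From Stdlib Require Import Lra Lia FunctionalExtensionality ClassicalEpsilon Classical.
From Stdlib Require Fin.
Open Scope R_scope.

Definition Nrm {d} (z : Rd d) : R := finsum d (fun i => Rabs (z i)).

Lemma finsum_ext d (f g : Fin.t d -> R) : (forall i, f i = g i) -> finsum d f = finsum d g.
Proof. revert f g; induction d; intros f g H; simpl; auto. rewrite H, (IHd (fun i => f (Fin.FS i)) (fun i => g (Fin.FS i))); auto. Qed.

Lemma finsum_le d (f g : Fin.t d -> R) : (forall i, f i <= g i) -> finsum d f <= finsum d g.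
Proof. revert f g; induction d; intros f g H; simpl; [lra|].
  assert (finsum d (fun i => f (Fin.FS i)) <= finsum d (fun i => g (Fin.FS i))) by (apply IHd; auto).
  specialize (H Fin.F1). lra. Qed.

Lemma finsum_plus d (f g : Fin.t d -> R) : finsum d (fun i => f i + g i) = finsum d f + finsum d g.
Proof. revert f g; induction d; intros f g; simpl; [lra|]. rewrite (IHd (fun i => f (Fin.FS i)) (fun i => g (Fin.FS i))). lra. Qed.

Lemma finsum_scal d (c : R) (f : Fin.t d -> R) : finsum d (fun i => c * f i) = c * finsum d f.
Proof. revert f; induction d; intros f; simpl; [lra|]. rewrite (IHd (fun i => f (Fin.FS i))). lra. Qed.

Lemma finsum_const d (c : R) : finsum d (fun _ => c) = INR d * c.
Proof. induction d; simpl; [lra|]. rewrite IHd. destruct d; simpl; lra. Qed.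

Lemma finsum_ge0 d (f : Fin.t d -> R) : (forall i, 0 <= f i) -> 0 <= finsum d f.
Proof. intros H. replace 0 with (finsum d (fun _ => 0)). apply finsum_le; auto.
  rewrite finsum_const; lra. Qed.

Lemma finsum_term d (f : Fin.t d -> R) : (forall i, 0 <= f i) -> forall i, f i <= finsum d f.
Proof. revert f; induction d; intros f H i. exact (Fin.case0 (fun i => f i <= finsum 0 f) i).
  pattern i; apply Fin.caseS'; simpl.
  - assert (0 <= finsum d (fun i => f (Fin.FS i))) by (apply finsum_ge0; auto). lra.
  - intros j. assert (f (Fin.FS j) <= finsum d (fun i => f (Fin.FS i))) by (apply (IHd (fun i => f (Fin.FS i))); auto).
    specialize (H Fin.F1). lra. Qed.

Lemma Nrm_ge0 d (z : Rd d) : 0 <= Nrm z.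
Proof. apply finsum_ge0; intros; apply Rabs_pos. Qed.

Lemma coord_le_Nrm d (z : Rd d) i : Rabs (z i) <= Nrm z.
Proof. apply (finsum_term d (fun i => Rabs (z i))). intros; apply Rabs_pos. Qed.

Lemma Nrm_tri d (a b c : Rd d) : Nrm (vsub a c) <= Nrm (vsub a b) + Nrm (vsub b c).
Proof. unfold Nrm. rewrite <- finsum_plus. apply finsum_le. intros i. unfold vsub.
  replace (a i - c i) with ((a i - b i) + (b i - c i)) by ring. apply Rabs_triang. Qed.

Lemma Nrm_sym d (a b : Rd d) : Nrm (vsub a b) = Nrm (vsub b a).
Proof. unfold Nrm, vsub. apply finsum_ext; intros; apply Rabs_minus_sym. Qed.

Lemma sq_le d (f : Fin.t d -> R) : finsum d (fun i => f i ^ 2) <= (finsum d (fun i => Rabs (f i)))^2.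
Proof. revert f; induction d; intros f; simpl; [lra|].
  specialize (IHd (fun i => f (Fin.FS i))). simpl in IHd.
  assert (0 <= finsum d (fun i => Rabs (f (Fin.FS i)))) by (apply finsum_ge0; intros; apply Rabs_pos).
  assert (f Fin.F1 * (f Fin.F1 * 1) = Rabs (f Fin.F1) * Rabs (f Fin.F1)) by (rewrite Rmult_1_r, <- Rabs_mult; symmetry; apply Rabs_right; nra).
  pose proof (Rabs_pos (f Fin.F1)). nra. Qed.

Lemma vnorm_le_Nrm d (z : Rd d) : vnorm z <= Nrm z.
Proof. unfold vnorm. rewrite <- (sqrt_pow2 (Nrm z)) by apply Nrm_ge0. apply sqrt_le_1_alt. apply sq_le. Qed.

Lemma coord_le_vnorm d (z : Rd d) i : Rabs (z i) <= vnorm z.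
Proof. unfold vnorm. rewrite <- sqrt_Rsqr_abs. apply sqrt_le_1_alt. unfold Rsqr.
  assert (H := finsum_term d (fun j => z j ^ 2) ltac:(intros; apply pow2_ge_0) i). cbv beta in H. rewrite <- Rsqr_pow2 in H. exact H. Qed.

Lemma Nrm_le_vnorm d (z : Rd d) : Nrm z <= INR d * vnorm z.
Proof. unfold Nrm. rewrite <- finsum_const. apply finsum_le. intros; apply coord_le_vnorm. Qed.


Fixpoint seqc (c : nat -> nat -> nat) (k : nat) : nat :=
  match k with 0%nat => c 0%nat 0%nat | S k' => c (S (seqc c k')) (S k') end.

Lemma extract (P : nat -> nat -> Prop) : (forall N k, exists p, (N <= p)%nat /\ P k p) ->
  exists phi : nat -> nat, (forall k, phi k < phi (S k))%nat /\ forall k, P k (phi k).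
Proof. intros H.
  assert (cd : forall N k, {p | (N <= p)%nat /\ P k p}) by (intros; apply constructive_indefinite_description; auto).
  exists (seqc (fun N k => proj1_sig (cd N k))). split.
  - intros k. simpl. destruct (proj2_sig (cd (S (seqc (fun N k => proj1_sig (cd N k)) k)) (S k))). lia.
  - intros [|k]; simpl; apply (proj2_sig (cd _ _)).
Qed.

Lemma incr_mono (phi : nat -> nat) : (forall k, phi k < phi (S k))%nat -> forall a b, (a < b)%nat -> (phi a < phi b)%nat.
Proof. intros H a b Hab. induction Hab. apply H. specialize (H m). lia. Qed.

Lemma incr_ge (phi : nat -> nat) : (forall k, phi k < phi (S k))%nat -> forall k, (k <= phi k)%nat.
Proof. intros H k; induction k. lia. specialize (H k); lia. Qed.

Lemma sub_1d (u : nat -> R) M : (forall n, Rabs (u n) <= M) ->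
  exists (phi : nat -> nat) l, (forall k, phi k < phi (S k))%nat /\
    forall eps, 0 < eps -> exists K, forall k, (K <= k)%nat -> Rabs (u (phi k) - l) < eps.
Proof. intros Hb.
  destruct (Bolzano_Weierstrass u (fun c => -M <= c <= M) (compact_P3 (-M) M)) as [l Hl].
  { intros n; specialize (Hb n). revert Hb; unfold Rabs; destruct (Rcase_abs (u n)); lra. }
  destruct (extract (fun k p => Rabs (u p - l) < / (INR k + 1))) as [phi [Hinc Hp]].
  { intros N k. destruct (Hl (fun x => Rabs (x - l) < / (INR k + 1)) N) as [p Hp].
    - assert (Hpos : 0 < / (INR k + 1)) by (apply Rinv_0_lt_compat; pose proof (pos_INR k); lra).
      exists (mkposreal _ Hpos). intros x Hx. exact Hx.
    - exists p; exact Hp. }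
  exists phi, l; split; auto.
  intros eps Heps. destruct (archimed (/ eps)) as [Ha _].
  assert (Hz : (0 <= up (/ eps))%Z). { apply le_IZR. pose proof (Rinv_0_lt_compat _ Heps). lra. }
  exists (Z.to_nat (up (/ eps))). intros k Hk.
  eapply Rlt_le_trans. apply Hp.
  assert (INR (Z.to_nat (up (/eps))) <= INR k) by (apply le_INR; auto).
  rewrite INR_IZR_INZ, Z2Nat.id in H by auto.
  rewrite <- (Rinv_inv eps). apply Rinv_le_contravar. apply Rinv_0_lt_compat; auto. lra.
Qed.

Lemma BW d : forall (u : nat -> Rd d) M, (forall n, Nrm (u n) <= M) ->
  exists (phi : nat -> nat) (l : Rd d), (forall k, phi k < phi (S k))%nat /\
    forall eps, 0 < eps -> exists K, forall k, (K <= k)%nat -> Nrm (vsub (u (phi k)) l) < eps.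
Proof. induction d; intros u M Hb.
  - exists (fun k => k), (vzero 0). split. intros; lia. intros eps He; exists 0%nat; intros; unfold Nrm; simpl; lra.
  - destruct (sub_1d (fun n => u n Fin.F1) M) as [phi1 [lh [Hi1 Hc1]]].
    { intros n. eapply Rle_trans; [apply coord_le_Nrm| apply Hb]. }
    destruct (IHd (fun n => fun i => u (phi1 n) (Fin.FS i)) M) as [phi2 [lt [Hi2 Hc2]]].
    { intros n. eapply Rle_trans; [|apply (Hb (phi1 n))]. unfold Nrm. simpl.
      pose proof (Rabs_pos (u (phi1 n) Fin.F1)). lra. }
    exists (fun k => phi1 (phi2 k)), (fun i => Fin.caseS' i (fun _ => R) lh lt). split.
    + intros k. apply incr_mono; auto.
    + intros eps He. destruct (Hc1 (eps/2)) as [K1 HK1]; [lra|]. destruct (Hc2 (eps/2)) as [K2 HK2]; [lra|].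
      exists (max K1 K2). intros k Hk. unfold Nrm, vsub. simpl.
      specialize (HK2 k ltac:(lia)). unfold Nrm, vsub in HK2.
      specialize (HK1 (phi2 k)). assert (Hg := incr_ge phi2 Hi2 k).
      specialize (HK1 ltac:(lia)). lra.
Qed.


Lemma le_eps a b : (forall eps, 0 < eps -> a <= b + eps) -> a <= b.
Proof. intros H. destruct (Rle_dec a b); auto. specialize (H ((a-b)/2)). lra. Qed.

Lemma nmulL d (L : Rd d -> Prop) l : is_add_subgroup L -> L l -> forall k, L (fun i => INR k * l i).
Proof. intros [H0 [Hadd Hopp]] Hl k. induction k.
  - replace (fun i => INR 0 * l i) with (vzero d); auto. apply functional_extensionality; intros; unfold vzero; simpl; ring.
  - replace (fun i => INR (S k) * l i) with (vadd l (fun i => INR k * l i)); auto.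
    apply functional_extensionality; intros; unfold vadd; rewrite S_INR; ring. Qed.

Lemma exists_notS d (S V L : Rd d -> Prop) x0 : is_vsubspace V -> ~ V x0 -> is_add_subgroup L ->
  is_discrete L -> is_direct_sum S V L -> exists y, ~ S y.
Proof. intros HV Hx0 HL Hdisc [HS Hdir].
  destruct (classic (exists y, ~ S y)) as [Hy|Hy]; auto. exfalso.
  assert (HallS : forall y, S y) by (intros y; apply NNPP; intro; apply Hy; eauto).
  destruct (proj1 (HS x0) (HallS x0)) as [v [l [Hv [Hl Hx]]]].
  destruct HL as [HL0 [HLadd HLopp]] eqn:HLe.
  destruct (Hdisc (vzero d) HL0) as [eps [Heps Hd]].
  destruct (archimed (Nrm l / eps)) as [Ha _].
  assert (Hz : (0 <= up (Nrm l / eps))%Z). { apply le_IZR. pose proof (Nrm_ge0 _ l). assert (0 <= Nrm l / eps) by (apply Rmult_le_pos; [lra| apply Rlt_le, Rinv_0_lt_compat; lra]). lra. }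
  set (m := Z.to_nat (up (Nrm l / eps))).
  assert (Hm : Nrm l / eps < INR m + 1).
  { unfold m. rewrite INR_IZR_INZ, Z2Nat.id by auto. lra. }
  assert (Hm0 : 0 < INR m + 1) by (pose proof (pos_INR m); lra).
  set (c := / (INR m + 1)).
  destruct (proj1 (HS (vscal c x0)) (HallS _)) as [v' [l' [Hv' [Hl' Hy']]]].
  assert (HxI : forall i, x0 i = v i + l i) by (intros i; rewrite Hx; reflexivity).
  assert (HyI : forall i, c * x0 i = v' i + l' i) by (intros i; change (vscal c x0 i = vadd v' l' i); rewrite <- Hy'; reflexivity).
  set (w := fun i => (INR m + 1) * v' i - v i).
  assert (HVw : V w).
  { destruct HV as [_ [HVadd HVsc]].
    replace w with (vadd (vscal (INR m + 1) v') (vscal (-1) v)); [auto|].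
    apply functional_extensionality; intros; unfold w, vadd, vscal; ring. }
  assert (HLw : L w).
  { replace w with (vadd l (vopp (fun i => INR (Datatypes.S m) * l' i))).
    apply HLadd; auto. apply HLopp. apply nmulL; auto.
    apply functional_extensionality; intros i; unfold w, vadd, vopp. rewrite S_INR.
    specialize (HxI i); specialize (HyI i). unfold c in HyI.
    assert (x0 i = (INR m + 1) * (v' i + l' i)) by (rewrite <- HyI; field; lra). lra. }
  assert (Hw0 := Hdir w HVw HLw).
  assert (Hll : forall i, l i = (INR m + 1) * l' i).
  { intros i. assert (w i = 0) by (rewrite Hw0; reflexivity). unfold w in H.
    specialize (HxI i); specialize (HyI i). unfold c in HyI.
    assert (x0 i = (INR m + 1) * (v' i + l' i)) by (rewrite <- HyI; field; lra). lra. }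
  assert (Hl'0 : l' = vzero d).
  { apply Hd; auto. eapply Rle_lt_trans; [apply vnorm_le_Nrm|].
    assert (Nrm (vsub l' (vzero d)) = c * Nrm l).
    { unfold Nrm. rewrite <- finsum_scal. apply finsum_ext. intros i. unfold vsub, vzero.
      rewrite Hll, Rabs_mult, (Rabs_right (INR m + 1)) by lra. unfold c.
      replace (l' i - 0) with (l' i) by ring. field. lra. }
    rewrite H. unfold c. apply (Rmult_lt_reg_l (INR m + 1)); auto. rewrite <- Rmult_assoc, Rinv_r by lra.
    assert (Nrm l < (INR m + 1) * eps).
    { replace (Nrm l) with ((Nrm l / eps) * eps) by (field; lra). apply Rmult_lt_compat_r; auto. }
    lra. }
  apply Hx0. replace x0 with v; auto. apply functional_extensionality; intros i.
  rewrite HxI, Hll, Hl'0. unfold vzero; ring.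
Qed.


Definition infset {d} (Gs : Rd d -> Prop) (x : Rd d) (r : R) := exists g, Gs g /\ r = - Nrm (vsub x g).

Lemma dist_exists d (Gs : Rd d -> Prop) g0 : Gs g0 ->
  exists phi : Rd d -> R, (forall x, 0 <= phi x) /\ (forall x g, Gs g -> phi x <= Nrm (vsub x g)) /\
    (forall x eps, 0 < eps -> exists g, Gs g /\ Nrm (vsub x g) < phi x + eps).
Proof. intros Hg0.
  assert (Hb : forall x, bound (infset Gs x)).
  { intros x. exists 0. intros r [g [_ ->]]. pose proof (Nrm_ge0 _ (vsub x g)). lra. }
  assert (Hne : forall x, exists r, infset Gs x r) by (intros x; exists (- Nrm (vsub x g0)), g0; auto).
  exists (fun x => - proj1_sig (completeness (infset Gs x) (Hb x) (Hne x))).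
  split; [|split].
  - intros x. destruct (completeness _ _ _) as [m [Hu Hl]]; simpl.
    assert (m <= 0). { apply Hl. intros r [g [_ ->]]. pose proof (Nrm_ge0 _ (vsub x g)). lra. } lra.
  - intros x g Hg. destruct (completeness _ _ _) as [m [Hu Hl]]; simpl.
    assert (- Nrm (vsub x g) <= m) by (apply Hu; exists g; auto). lra.
  - intros x eps He. destruct (completeness _ _ _) as [m [Hu Hl]]; simpl.
    apply NNPP; intros Hn.
    assert (m <= m - eps).
    { apply Hl. intros r [g [Hg ->]]. destruct (Rle_dec (- Nrm (vsub x g)) (m - eps)); auto.
      exfalso; apply Hn; exists g; split; auto; lra. }
    lra.
Qed.

Lemma lip d (Gs : Rd d -> Prop) (phi : Rd d -> R) :
  (forall x g, Gs g -> phi x <= Nrm (vsub x g)) ->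
  (forall x eps, 0 < eps -> exists g, Gs g /\ Nrm (vsub x g) < phi x + eps) ->
  forall x x', phi x <= phi x' + Nrm (vsub x x').
Proof. intros P2 P3 x x'. apply le_eps; intros eps He.
  destruct (P3 x' eps He) as [g [Hg Hlt]]. pose proof (P2 x g Hg). pose proof (Nrm_tri _ x x' g). lra. Qed.


Definition Dp (f : R -> R) := exists l, derivable_pt_lim f 0 l.
Definition Dc (F : R -> Cplx) := Dp (fun s => fst (F s)) /\ Dp (fun s => snd (F s)).

Lemma Dp_plus f g : Dp f -> Dp g -> Dp (fun s => f s + g s).
Proof. intros [a Ha] [b Hb]. exists (a+b). exact (derivable_pt_lim_plus f g 0 a b Ha Hb). Qed.
Lemma Dp_minus f g : Dp f -> Dp g -> Dp (fun s => f s - g s).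
Proof. intros [a Ha] [b Hb]. exists (a-b). exact (derivable_pt_lim_minus f g 0 a b Ha Hb). Qed.
Lemma Dp_mult f g : Dp f -> Dp g -> Dp (fun s => f s * g s).
Proof. intros [a Ha] [b Hb]. eexists. exact (derivable_pt_lim_mult f g 0 a b Ha Hb). Qed.
Lemma Dp_const c : Dp (fun _ => c).
Proof. exists 0. exact (derivable_pt_lim_const c 0). Qed.
Lemma Dp_id : Dp (fun s => s).
Proof. exists 1. exact (derivable_pt_lim_id 0). Qed.
Lemma Dp_exp f : Dp f -> Dp (fun s => exp (f s)).
Proof. intros [a Ha]. eexists. exact (derivable_pt_lim_comp f exp 0 a _ Ha (derivable_pt_lim_exp _)). Qed.
Lemma Dp_cos f : Dp f -> Dp (fun s => cos (f s)).
Proof. intros [a Ha]. eexists. exact (derivable_pt_lim_comp f cos 0 a _ Ha (derivable_pt_lim_cos _)). Qed.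
Lemma Dp_sin f : Dp f -> Dp (fun s => sin (f s)).
Proof. intros [a Ha]. eexists. exact (derivable_pt_lim_comp f sin 0 a _ Ha (derivable_pt_lim_sin _)). Qed.
Lemma Dp_opp f : Dp f -> Dp (fun s => - f s).
Proof. intros H. assert (H2 := Dp_minus _ _ (Dp_const 0) H). destruct H2 as [a Ha]. exists a.
  eapply derivable_pt_lim_ext; [|exact Ha]. intros; simpl; ring. Qed.

Lemma Dc_const c : Dc (fun _ => c).
Proof. split; apply Dp_const. Qed.
Lemma Dc_add F G : Dc F -> Dc G -> Dc (fun s => Cadd (F s) (G s)).
Proof. intros [H1 H2] [H3 H4]; split; simpl; apply Dp_plus; auto. Qed.
Lemma Dc_mul F G : Dc F -> Dc G -> Dc (fun s => Cmul (F s) (G s)).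
Proof. intros [H1 H2] [H3 H4]; split; simpl.
  apply Dp_minus; apply Dp_mult; auto. apply Dp_plus; apply Dp_mult; auto. Qed.
Lemma Dc_exp F : Dc F -> Dc (fun s => Cexp (F s)).
Proof. intros [H1 H2]; split; simpl; apply Dp_mult; auto using Dp_exp, Dp_cos, Dp_sin. Qed.

Lemma Dc_cfinsum d : forall (f : Fin.t d -> R -> Cplx), (forall i, Dc (f i)) -> Dc (fun s => cfinsum d (fun i => f i s)).
Proof. induction d; intros f H; simpl. apply Dc_const.
  apply Dc_add. auto. apply (IHd (fun i => f (Fin.FS i))); auto. Qed.

Section Line.
Variables (d : nat) (x0 u : Rd d).
Definition line (s : R) : Rd d := fun i => x0 i + s * u i.

Lemma Dc_coord i : Dc (fun s => CR (line s i)).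
Proof. split; simpl; unfold line. apply Dp_plus. apply Dp_const. apply Dp_mult. apply Dp_id. apply Dp_const. apply Dp_const. Qed.

Lemma Dc_poly p : is_poly p -> Dc (fun s => p (line s)).
Proof. induction 1. apply Dc_const. apply Dc_coord. apply Dc_add; auto. apply Dc_mul; auto. Qed.

Lemma Dc_cdot lam : Dc (fun s => cdot lam (line s)).
Proof. unfold cdot. apply (Dc_cfinsum d (fun i s => Cmul (lam i) (CR (line s i)))).
  intros i. apply Dc_mul. apply Dc_const. apply Dc_coord. Qed.

Lemma Dc_exppoly (terms : list ((Rd d -> Cplx) * (Fin.t d -> Cplx))) :
  (forall pl, In pl terms -> is_poly (fst pl)) ->
  Dc (fun s => csum_list (map (fun pl => Cmul ((fst pl) (line s)) (Cexp (cdot (snd pl) (line s)))) terms)).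
Proof. induction terms as [|pl terms IH]; intros H; simpl. apply Dc_const.
  apply Dc_add. apply Dc_mul. apply Dc_poly; apply H; simpl; auto. apply Dc_exp, Dc_cdot. apply IH; intros; apply H; simpl; auto. Qed.

Lemma exp_poly_line (phi : Rd d -> R) : exp_poly (fun x => CR (phi x)) -> Dp (fun s => phi (line s)).
Proof. intros [terms [Hp Heq]]. destruct (Dc_exppoly terms Hp) as [[l Hl] _]. exists l.
  eapply derivable_pt_lim_ext; [|exact Hl]. intros s. simpl. rewrite <- Heq. reflexivity. Qed.
End Line.


Lemma rsum_ext t f g : (forall j, f j = g j) -> rsum t f = rsum t g.
Proof. intros H; induction t; simpl; auto. rewrite IHt, H; auto. Qed.

Lemma rsum_delta0 t f c k : (t <= k)%nat -> rsum t (fun j => f j + (if Nat.eqb j k then c else 0)) = rsum t f.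
Proof. induction t; intros Hk; simpl. lra. rewrite IHt by lia.
  destruct (Nat.eqb t k) eqn:E1. apply Nat.eqb_eq in E1; lia. lra. Qed.

Lemma rsum_delta t f c k : (k < t)%nat -> rsum t (fun j => f j + (if Nat.eqb j k then c else 0)) = rsum t f + c.
Proof. induction t; intros Hk; simpl. lia.
  destruct (Nat.eq_dec t k).
  - subst. rewrite rsum_delta0 by lia. rewrite Nat.eqb_refl. lra.
  - rewrite IHt by lia. apply Nat.eqb_neq in n. rewrite n. lra. Qed.

Lemma gen_shift d t (h : nat -> Rd d) k (z : Z) g : (k < t)%nat -> gen_subgroup t h g ->
  gen_subgroup t h (fun i => g i + IZR z * h k i).
Proof. intros Hk [m Hm]. exists (fun j => (m j + if Nat.eqb j k then z else 0)%Z).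
  apply functional_extensionality; intros i. subst g. symmetry.
  rewrite (rsum_ext t _ (fun j => IZR (m j) * h j i + (if Nat.eqb j k then IZR z * h k i else 0))).
  rewrite rsum_delta by auto. reflexivity.
  intros j. destruct (Nat.eqb j k) eqn:E. apply Nat.eqb_eq in E; subst. rewrite plus_IZR; ring.
  rewrite Z.add_0_r; ring. Qed.

Lemma inv_small eps : 0 < eps -> exists N, forall k, (N <= k)%nat -> / (INR k + 1) < eps.
Proof. intros Heps. destruct (archimed (/ eps)) as [Ha _].
  assert (Hz : (0 <= up (/ eps))%Z). { apply le_IZR. pose proof (Rinv_0_lt_compat _ Heps). lra. }
  exists (Z.to_nat (up (/ eps))). intros k Hk.
  assert (INR (Z.to_nat (up (/eps))) <= INR k) by (apply le_INR; auto).
  rewrite INR_IZR_INZ, Z2Nat.id in H by auto.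
  rewrite <- (Rinv_inv eps). apply Rinv_lt_contravar. apply Rmult_lt_0_compat. apply Rinv_0_lt_compat; auto.
  pose proof (pos_INR k); lra. lra. Qed.


Theorem proposition7 (d t : nat) (n : nat -> nat) (h : nat -> Rd d)
  (V L : Rd d -> Prop) :
  (0 < t)%nat ->
  (forall k, (k < t)%nat -> (0 < n k)%nat) ->
  is_vsubspace V ->
  (exists x, ~ V x) ->
  is_add_subgroup L ->
  is_discrete L ->
  is_direct_sum (closure (gen_subgroup t h)) V L ->
  exists (H : (Rd d -> Cplx) -> Prop) (phi : Rd d -> R),
    fin_dim_subspace_C H /\
    (forall k f, (k < t)%nat -> H f -> H (Diff (h k) f)) /\
    rcontinuous phi /\
    (forall k, (k < t)%nat -> H (DiffPow (h k) (n k) (fun x => CR (phi x)))) /\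
    ~ exp_poly (fun x => CR (phi x)).
Proof.
  intros Ht Hn HV [x0 Hx0] HL Hdisc Hds.
  destruct (exists_notS d _ V L x0 HV Hx0 HL Hdisc Hds) as [y Hy].
  set (G := gen_subgroup t h) in *.
  assert (HG0 : G (fun i => rsum t (fun k => IZR 0 * h k i))) by (exists (fun _ => 0%Z); reflexivity).
  destruct (dist_exists d G _ HG0) as [phi [P1 [P2 P3]]].
  assert (Lp := lip d G phi P2 P3).
  assert (Hinv : forall k x, (k < t)%nat -> phi (vadd x (h k)) = phi x).
  { intros k x Hk. apply Rle_antisym; apply le_eps; intros eps He.
    - destruct (P3 x eps He) as [g [Hg Hlt]].
      assert (Hg' := gen_shift d t h k 1 g Hk Hg). assert (Hle := P2 (vadd x (h k)) _ Hg').
      assert (Nrm (vsub (vadd x (h k)) (fun i => g i + IZR 1 * h k i)) = Nrm (vsub x g)).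
      { unfold Nrm; apply finsum_ext; intros i; unfold vsub, vadd. f_equal; simpl; ring. }
      lra.
    - destruct (P3 (vadd x (h k)) eps He) as [g [Hg Hlt]].
      assert (Hg' := gen_shift d t h k (-1) g Hk Hg). assert (Hle := P2 x _ Hg').
      assert (Nrm (vsub x (fun i => g i + IZR (-1) * h k i)) = Nrm (vsub (vadd x (h k)) g)).
      { unfold Nrm; apply finsum_ext; intros i; unfold vsub, vadd. f_equal; simpl; ring. }
      lra. }
  assert (cd : forall m : nat, {g | G g /\ Nrm (vsub y g) < phi y + / (INR m + 1)}).
  { intros m; apply constructive_indefinite_description. apply P3.
    apply Rinv_0_lt_compat; pose proof (pos_INR m); lra. }
  set (pn := fun m => proj1_sig (cd m)).
  assert (Hpn : forall m, G (pn m) /\ Nrm (vsub y (pn m)) < phi y + / (INR m + 1)) by (intros m; exact (proj2_sig (cd m))).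
  destruct (BW d pn (Nrm y + phi y + 1)) as [ps [p [Hinc Hconv]]].
  { intros m. destruct (Hpn m) as [_ Hm].
    assert (/ (INR m + 1) <= 1).
    { rewrite <- Rinv_1. apply Rinv_le_contravar. lra. pose proof (pos_INR m); lra. }
    assert (Nrm (pn m) <= Nrm y + Nrm (vsub y (pn m))).
    { unfold Nrm. rewrite <- finsum_plus. apply finsum_le. intros i. unfold vsub.
      assert (Rabs (pn m i) = Rabs (y i + - (y i - pn m i))) by (f_equal; ring).
      rewrite H0. eapply Rle_trans. apply Rabs_triang. rewrite Rabs_Ropp. lra. }
    lra. }
  assert (Hpcl : closure G p).
  { intros eps He. destruct (Hconv eps He) as [K HK]. exists (pn (ps K)). split. apply Hpn.
    eapply Rle_lt_trans. apply vnorm_le_Nrm. rewrite Nrm_sym. apply HK. lia. }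
  assert (Hphip : phi p = 0).
  { apply Rle_antisym; [|apply P1]. apply le_eps; intros eps He.
    destruct (Hconv eps He) as [K HK]. assert (P2' := P2 p _ (proj1 (Hpn (ps K)))).
    rewrite Nrm_sym in P2'. specialize (HK K (le_n K)). lra. }
  assert (Hyp : Nrm (vsub y p) <= phi y).
  { apply le_eps; intros eps He.
    destruct (Hconv (eps/2)) as [K HK]; [lra|]. destruct (inv_small (eps/2)) as [N HN]; [lra|].
    set (k := max K N). specialize (HK k ltac:(lia)).
    assert (Hk1 := incr_ge ps Hinc k). specialize (HN (ps k) ltac:(lia)).
    destruct (Hpn (ps k)) as [_ Hlt].
    pose proof (Nrm_tri _ y (pn (ps k)) p). lra. }
  set (e := vsub y p).
  assert (He : 0 < Nrm e).
  { destruct (Rlt_le_dec 0 (Nrm e)) as [Hlt|Hle]; auto. exfalso. apply Hy.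
    replace y with p; auto. apply functional_extensionality; intros i.
    assert (Hc := coord_le_Nrm _ e i). pose proof (Rabs_pos (e i)).
    assert (Rabs (e i) = 0) by lra. unfold e, vsub in H0. revert H0; unfold Rabs; destruct (Rcase_abs (y i - p i)); lra. }
  exists (fun f => forall x, f x = C0), phi.
  split; [|split; [|split; [|split]]].
  - split; [|split; [|split; [|split]]].
    + intros f Hf x eps Heps. exists 1. split; [lra|]. intros y0 _. rewrite !Hf.
      unfold Cnorm, Csub, Cadd, Copp, C0; simpl.
      replace ((0 + - 0) * ((0 + - 0) * 1) + (0 + - 0) * ((0 + - 0) * 1)) with 0 by ring.
      rewrite sqrt_0; lra.
    + intros; reflexivity.
    + intros f g Hf Hg x. rewrite Hf, Hg. unfold Cadd, C0; simpl. f_equal; ring.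
    + intros c f Hf x. rewrite Hf. unfold Cmul, C0; simpl. f_equal; ring.
    + exists nil. intros f Hf. exists nil. split; [reflexivity|]. intros x. simpl. apply Hf.
  - intros k f Hk Hf x. unfold Diff. rewrite !Hf. unfold Csub, Cadd, Copp, C0; simpl. f_equal; ring.
  - intros x eps Heps. exists (eps / (INR d + 1)).
    assert (Hd0 : 0 < INR d + 1) by (pose proof (pos_INR d); lra).
    split. apply Rdiv_lt_0_compat; lra.
    intros y0 Hy0. assert (H1 := Lp y0 x). assert (H2 := Lp x y0). rewrite Nrm_sym in H2.
    assert (H3 := Nrm_le_vnorm _ (vsub y0 x)).
    assert (Hv0 : 0 <= vnorm (vsub y0 x)) by apply sqrt_pos.
    assert (INR d * vnorm (vsub y0 x) < eps).
    { apply Rle_lt_trans with ((INR d + 1) * vnorm (vsub y0 x)). nra.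
      replace eps with ((INR d + 1) * (eps / (INR d + 1))) by (field; lra).
      apply Rmult_lt_compat_l; auto. }
    apply Rabs_def1; lra.
  - intros k Hk.
    assert (Hgen : forall m, (0 < m)%nat -> forall x, DiffPow (h k) m (fun x => CR (phi x)) x = C0).
    { induction m; intros Hm x. lia. destruct m.
      - simpl. unfold Diff, Csub, Cadd, Copp, CR, C0; simpl. rewrite Hinv by auto. f_equal; ring.
      - change (Diff (h k) (DiffPow (h k) (S m) (fun x => CR (phi x))) x = C0). unfold Diff. rewrite !(IHm ltac:(lia)). unfold Csub, Cadd, Copp, C0; simpl. f_equal; ring. }
    apply Hgen. apply Hn; auto.
  - intros Hep. destruct (exp_poly_line d p e phi Hep) as [l Hl].
    assert (Hg0 : phi (line d p e 0) = 0).
    { replace (line d p e 0) with p; auto. apply functional_extensionality; intros; unfold line; ring. }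
    assert (Hpos : forall s, 0 < s <= 1 -> s * Nrm e <= phi (line d p e s)).
    { intros s Hs. assert (H1 := Lp y (line d p e s)).
      assert (Nrm (vsub y (line d p e s)) = (1 - s) * Nrm e).
      { unfold Nrm. rewrite <- finsum_scal. apply finsum_ext; intros i. unfold vsub, line, e, vsub.
        replace (y i - (p i + s * (y i - p i))) with ((1 - s) * (y i - p i)) by ring.
        rewrite Rabs_mult, (Rabs_right (1 - s)) by lra. reflexivity. }
      change (Nrm (vsub y p)) with (Nrm e) in Hyp. rewrite H in H1. nra. }
    destruct (Hl (Nrm e / 2)) as [delta Hdel]; [lra|].
    set (hh := Rmin (delta / 2) (1/2)).
    assert (Hhh : 0 < hh /\ hh < delta /\ hh <= 1/2).
    { destruct delta as [dl Hdl]; simpl. unfold hh, Rmin; simpl; destruct (Rle_dec (dl/2) (1/2)); lra. }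
    assert (Q1 := Hdel hh ltac:(lra) ltac:(rewrite Rabs_right; lra)).
    assert (Q2 := Hdel (- hh) ltac:(lra) ltac:(rewrite Rabs_Ropp, Rabs_right; lra)).
    rewrite Rplus_0_l, Hg0 in Q1, Q2.
    assert (A1 := Hpos hh ltac:(lra)). assert (A2 := P1 (line d p e (- hh))).
    assert (B1 : Nrm e <= (phi (line d p e hh) - 0) / hh).
    { unfold Rdiv. apply Rmult_le_reg_r with hh. lra. rewrite Rmult_assoc, Rinv_l by lra. lra. }
    assert (B2 : (phi (line d p e (- hh)) - 0) / (- hh) <= 0).
    { unfold Rdiv. rewrite Rinv_opp. assert (0 < / hh) by (apply Rinv_0_lt_compat; lra). nra. }
    apply Rabs_def2 in Q1. apply Rabs_def2 in Q2. lra.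
Qed.
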